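(* Let $X$ be a uniformly locally finite metric space, $\sigma$ an automorphism of $\mathrm{C}^*_u(X)$, and $f\colon X\to X$ a map such that \[ \inf_{x\in X}\|\sigma(e_{xx})\delta_{f(x)}\|>0. \] Suppose that for every $A\subseteq X$ there is a unitary $u\in\mathrm{C}^*_u(X)$ with $\sigma(p_A)=up_Au^*$. Then $f$ is close to the identity, i.e. $\sup_{x\in X}d(x,f(x))<\infty$.
   Context: Uniformly locally finite: $\sup_x|B_r(x)|<\infty$ for all $r>0$. $(\delta_x)$ canonical basis of $\ell_2(X)$; $e_{xx}$ is the rank-one orthogonal projection onto $\mathbb{C}\delta_x$; $p_A$ is the orthogonal projection onto $\ell_2(A)$. A partial translation is a bijection $f\colon\mathrm{dom}(f)\subseteq X\to\mathrm{ran}(f)\subseteq X$ with $\sup_{x}d(x,f(x))<\infty$; $v_f\delta_x=\delta_{f(x)}$ on $\mathrm{dom}(f)$, $0$ elsewhere; $\mathrm{C}^*_u(X)$ is the $\mathrm{C}^*$-algebra generated by all $v_f$. *)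

(* Defs.v *)
From HB Require Import structures.
From mathcomp Require Import all_boot all_order all_algebra finmap.
From mathcomp Require Import complex.
From mathcomp Require Import boolp classical_sets reals constructive_ereal ereal esum.

Set Implicit Arguments.
Unset Strict Implicit.
Unset Printing Implicit Defensive.

Import Order.TTheory GRing.Theory Num.Theory.
Local Open Scope ring_scope.

(* Bounded operators on l2(X) are represented by their matrices
   T : X -> X -> C w.r.t. the canonical basis (delta_x): T x y = <T delta_y, delta_x>. *)

Section UniformRoe.
Variable R : realType.
Local Notation C := (R[i]).
Variable X : choiceType.

Definition nrm2 (z : C) : R := (@complex.Re R z) ^+ 2 + (@complex.Im R z) ^+ 2.

Definition mat := X -> X -> C.

Definition l2norm2 (v : X -> C) : \bar R :=
  (\esum_(z in [set: X]) (nrm2 (v z))%:E)%E.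

(* ||T|| <= M : for every finitely supported vector v (support in S),
   ||T v||^2 <= M^2 ||v||^2, the norm of T v being the sup over finite F. *)
Definition bounded_by (T : mat) (M : R) : Prop :=
  forall (S F : {fset X}) (v : X -> C),
    \sum_(x <- F) nrm2 (\sum_(y <- S) T x y * v y)
      <= M ^+ 2 * \sum_(y <- S) nrm2 (v y).

Definition sum_conv (g : X -> C) (c : C) : Prop :=
  forall e : R, 0 < e -> exists F0 : {fset X},
    forall F : {fset X}, fsubset F0 F -> nrm2 (\sum_(y <- F) g y - c) <= e.

(* operator product (matrix product; entries converge for bounded operators) *)
Definition mprod (S T : mat) : mat :=
  fun x z => xget 0 [set c | sum_conv (fun y => S x y * T y z) c].

Definition adj (T : mat) : mat := fun x y => conjc (T y x).

Definition idm : mat := fun x y => if x == y then 1 else 0.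

Definition proj (A : set X) : mat :=
  fun x y => if (x == y) && `[< A x >] then 1 else 0.

Definition eproj (x0 : X) : mat := proj [set x0].

Variable d : X -> X -> R.

Definition is_metric : Prop :=
  [/\ forall x y, 0 <= d x y,
      forall x y, d x y = 0 <-> x = y,
      forall x y, d x y = d y x &
      forall x y z, d x z <= d x y + d y z].

Definition unif_loc_finite : Prop :=
  forall r : R, exists N : nat, forall x : X,
    exists s : seq X, (size s <= N)%N /\ forall y, d x y <= r -> y \in s.

(* partial translation, encoded as a partial map f : X -> option X
   (dom f = {x | f x <> None}) *)
Definition is_ptrans (f : X -> option X) : Prop :=
  (forall x y z, f x = Some z -> f y = Some z -> x = y) /\
  exists r : R, forall x y, f x = Some y -> d x y <= r.

(* v_f delta_x = delta_{f x} on dom f, 0 elsewhere *)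
Definition vmat (f : X -> option X) : mat :=
  fun y x => if f x == Some y then 1 else 0.

Inductive star_gen : mat -> Prop :=
  | sg_pt f : is_ptrans f -> star_gen (vmat f)
  | sg_lin (a : C) S T : star_gen S -> star_gen T ->
      star_gen (fun x y => a * S x y + T x y)
  | sg_mul S T : star_gen S -> star_gen T -> star_gen (mprod S T)
  | sg_adj S : star_gen S -> star_gen (adj S).

Definition Cu (T : mat) : Prop :=
  forall e : R, 0 < e -> exists S, star_gen S /\
    bounded_by (fun x y => T x y - S x y) e.

Definition is_Cu_automorphism (s : mat -> mat) : Prop :=
  (forall T, Cu T -> Cu (s T)) /\
  (forall T1 T2, Cu T1 -> Cu T2 -> s T1 = s T2 -> T1 = T2) /\
  (forall T, Cu T -> exists T', Cu T' /\ s T' = T) /\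
  (forall (a : C) T1 T2, Cu T1 -> Cu T2 ->
     s (fun x y => a * T1 x y + T2 x y) = (fun x y => a * s T1 x y + s T2 x y)) /\
  (forall T1 T2, Cu T1 -> Cu T2 -> s (mprod T1 T2) = mprod (s T1) (s T2)) /\
  (forall T, Cu T -> s (adj T) = adj (s T)).

Definition unitary_Cu (u : mat) : Prop :=
  [/\ Cu u, mprod u (adj u) = idm & mprod (adj u) u = idm].

End UniformRoe.

Arguments eproj {R X} x0 _ _.
Arguments proj {R X} A _ _.
Arguments idm {R X} _ _.

(* Main.v *)
Require Import Defs.
From HB Require Import structures.
From mathcomp Require Import all_boot all_order all_algebra finmap.
From mathcomp Require Import complex.
From mathcomp Require Import boolp classical_sets reals constructive_ereal ereal esum.
From mathcomp Require Import fsbigop.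
From mathcomp Require Import lra ring.
Import Order.TTheory GRing.Theory Num.Theory.
Local Open Scope ring_scope.

Section Aux.
Context {R : realType}.
Local Notation C := (R[i]).
Context {X : choiceType}.
Local Notation nrm2 := (@nrm2 R).

Lemma nrm2_ge0 (z : C) : 0 <= nrm2 z.
Proof. case: z => a b; rewrite /nrm2 /=; nra. Qed.

Lemma nrm2_eq0 (z : C) : nrm2 z = 0 -> z = 0.
Proof.
case: z => a b; rewrite /nrm2 /= => h.
have ha : a = 0 by nra. have hb : b = 0 by nra. by rewrite ha hb.
Qed.

Lemma nrm2D (z w : C) : nrm2 (z + w) <= 2 * nrm2 z + 2 * nrm2 w.
Proof.
case: z => a b; case: w => c e; rewrite /nrm2 /=.
have := sqr_ge0 (a - c); have := sqr_ge0 (b - e); rewrite !expr2; nra.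
Qed.

Lemma nrm2N (z : C) : nrm2 (- z) = nrm2 z.
Proof. case: z => a b; rewrite /nrm2 /=; ring. Qed.

Lemma nrm2_real (r : R) : nrm2 (r%:C)%C = r ^+ 2.
Proof. rewrite /nrm2 /=; ring. Qed.

Lemma nrm2_1 : nrm2 1 = 1.
Proof. rewrite /nrm2 /=; ring. Qed.

Lemma mulJc (z : C) : conjc z * z = ((nrm2 z)%:C)%C.
Proof.
case: z => a b; rewrite /nrm2 /=.
apply/eqP; rewrite eq_complex /=; apply/andP; split; apply/eqP; ring.
Qed.

Lemma mulcJ (z : C) : z * conjc z = ((nrm2 z)%:C)%C.
Proof. by rewrite mulrC mulJc. Qed.

Lemma sum_realC (I : Type) (s : seq I) (h : I -> R) :
  \sum_(i <- s) ((h i)%:C)%C = ((\sum_(i <- s) h i)%:C)%C.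
Proof. by rewrite rmorph_sum. Qed.

Lemma sum_le_sub (l1 l2 : seq X) (h : X -> R) :
  uniq l1 -> uniq l2 -> {subset l1 <= l2} -> (forall x, 0 <= h x) ->
  \sum_(x <- l1) h x <= \sum_(x <- l2) h x.
Proof.
move=> u1 u2 sub h0.
rewrite [X in _ <= X](bigID (mem l1)) /=.
have -> : \sum_(i <- l2 | i \in l1) h i = \sum_(i <- l1) h i.
  rewrite -big_filter; apply: perm_big.
  apply: uniq_perm; [exact: filter_uniq|exact: u1|].
  move=> x; rewrite mem_filter; case: (boolP (x \in l1)) => //= /sub -> //.
rewrite lerDl; apply: sumr_ge0 => *; exact: h0.
Qed.

Lemma le_sum_mem (l : seq X) (h : X -> R) x :
  uniq l -> x \in l -> (forall x, 0 <= h x) -> h x <= \sum_(y <- l) h y.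
Proof.
move=> u xl h0.
have := @sum_le_sub [:: x] l h isT u _ h0.
rewrite big_seq1; apply => y; rewrite inE => /eqP ->; exact: xl.
Qed.

Lemma sum_conv_uniq (g : X -> C) c1 c2 :
  sum_conv g c1 -> sum_conv g c2 -> c1 = c2.
Proof.
move=> h1 h2; apply/eqP; rewrite -subr_eq0; apply/eqP; apply: nrm2_eq0.
apply/eqP; rewrite eq_le nrm2_ge0 andbT.
apply/negP => /negP; rewrite -ltNge => pos.
set e := nrm2 (c1 - c2) / 8.
have e0 : 0 < e by rewrite /e divr_gt0.
have [F1 HF1] := h1 e e0; have [F2 HF2] := h2 e e0.
have k1 := HF1 (F1 `|` F2)%fset (fsubsetUl _ _).
have k2 := HF2 (F1 `|` F2)%fset (fsubsetUr _ _).
set s := \sum_(y <- (F1 `|` F2)%fset) g y in k1 k2.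
have : nrm2 (c1 - c2) <= 2 * nrm2 (s - c2) + 2 * nrm2 (- (s - c1)).
  have -> : c1 - c2 = (s - c2) + - (s - c1) by ring.
  exact: nrm2D.
rewrite nrm2N => h.
have : nrm2 (c1 - c2) <= 4 * e by lra.
rewrite /e; lra.
Qed.

Lemma sum_conv_fin (g : X -> C) (s : seq X) :
  uniq s -> (forall z, z \notin s -> g z = 0) -> sum_conv g (\sum_(z <- s) g z).
Proof.
move=> us g0 e e0; exists (seq_fset tt s) => F /fsubsetP sub.
have -> : \sum_(y <- F) g y = \sum_(z <- s) g z.
  rewrite (bigID (mem s)) /=.
  have -> : \sum_(i <- F | i \notin s) g i = 0 by apply: big1 => i; apply: g0.
  rewrite addr0.
  rewrite -big_filter; apply: perm_big.
  apply: uniq_perm; [exact: filter_uniq (fset_uniq _)|exact: us|].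
  move=> x; rewrite mem_filter; case: (boolP (x \in s)) => //= xs.
  by apply: sub; rewrite seq_fsetE.
by rewrite subrr /nrm2 /= expr0n /= addr0 ltW.
Qed.

Definition ssum (h : X -> R) : R :=
  sup [set t | exists F : {fset X}, t = \sum_(z <- F) h z].

Definition sbounded (h : X -> R) := exists B, forall F : {fset X}, \sum_(z <- F) h z <= B.

Lemma ssum_ub h (F : {fset X}) : sbounded h -> \sum_(z <- F) h z <= ssum h.
Proof.
move=> [B hB]; apply: sup_upper_bound; last by exists F.
split; first by exists (\sum_(z <- F) h z), F.
by exists B => t [G ->].
Qed.

Lemma ssum_le h b : (forall F : {fset X}, \sum_(z <- F) h z <= b) -> ssum h <= b.
Proof.
move=> hb; apply: ge_sup; first by exists (\sum_(z <- fset0) h z), fset0.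
by move=> t [G ->].
Qed.

Lemma ssum_ge0 h : (forall x, 0 <= h x) -> sbounded h -> 0 <= ssum h.
Proof.
move=> h0 hb; have := ssum_ub h fset0 hb.
by rewrite big_seq_fset0.
Qed.

Lemma sum_conv_ssum (h : X -> R) :
  (forall x, 0 <= h x) -> sbounded h ->
  sum_conv (fun z => ((h z)%:C)%C) ((ssum h)%:C)%C.
Proof.
move=> h0 hb e e0.
set e' := Order.min e 1.
have e'0 : 0 < e' by rewrite /e' lt_min e0 ltr01.
have [t [F0 ->] lt] : exists2 t, (exists F : {fset X}, t = \sum_(z <- F) h z)
    & ssum h - e' < t.
  apply: sup_adherent => //; split; first by exists (\sum_(z <- fset0) h z), fset0.
  by case: hb => B hB; exists B => t [G ->].
exists F0 => F /fsubsetP sub.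
rewrite sum_realC -rmorphB nrm2_real.
have le1 : \sum_(z <- F0) h z <= \sum_(z <- F) h z.
  by apply: sum_le_sub => //; exact: fset_uniq.
have le2 := ssum_ub h F hb.
have e'e : e' <= e by rewrite /e' ge_min lexx.
have e'1 : e' <= 1 by rewrite /e' ge_min lexx orbT.
nra.
Qed.

End Aux.

Set Implicit Arguments.
Unset Strict Implicit.
Unset Printing Implicit Defensive.

Section Ops.
Variable R : realType.
Local Notation C := (R[i]).
Variable X : choiceType.
Local Notation nrm2 := (@nrm2 R).
Variable d : X -> X -> R.
Hypothesis dm : is_metric d.
Hypothesis ulf : unif_loc_finite d.

Lemma d_sym x y : d x y = d y x.
Proof. by case: dm. Qed.
Lemma d_tri x y z : d x z <= d x y + d y z.
Proof. by case: dm. Qed.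
Lemma d_xx x : d x x = 0.
Proof. by case: dm => _ h _ _; apply/h. Qed.

Lemma bounded_row {T : mat R X} {M} y (S : {fset X}) :
  bounded_by T M -> \sum_(a <- S) nrm2 (T y a) <= M ^+ 2.
Proof.
move=> H; have := H S [fset y]%fset (fun a => conjc (T y a)).
rewrite big_seq_fset1 /=.
under eq_bigr do rewrite mulcJ.
rewrite sum_realC nrm2_real.
have -> : \sum_(y0 <- S) nrm2 (conjc (T y y0)) = \sum_(a <- S) nrm2 (T y a).
  by apply: eq_bigr => a _; case: (T y a) => p q; rewrite /nrm2 /=; ring.
have t0 : 0 <= \sum_(a <- S) nrm2 (T y a) by apply: sumr_ge0 => *; exact: nrm2_ge0.
set t := \sum_(a <- S) nrm2 (T y a) in t0 *.
move=> h; have M0 : 0 <= M ^+ 2 by rewrite sqr_ge0.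
rewrite expr2 in h; nra.
Qed.

Lemma bounded_col {T : mat R X} {M} y (F : {fset X}) :
  bounded_by T M -> \sum_(x <- F) nrm2 (T x y) <= M ^+ 2.
Proof.
move=> H; have := H [fset y]%fset F (fun _ => 1).
rewrite big_seq_fset1 nrm2_1 mulr1.
by under eq_bigr do rewrite big_seq_fset1 mulr1.
Qed.

Lemma mprod_eq (S T : mat R X) x z c :
  sum_conv (fun y => S x y * T y z) c -> mprod S T x z = c.
Proof.
move=> h; rewrite /mprod; apply: xget_unique => // c' h'.
exact: sum_conv_uniq h' h.
Qed.

Definition fprop (T : mat R X) := exists r : R, forall x y, r < d x y -> T x y = 0.

Lemma star_gen_fprop {S} : star_gen d S -> fprop S.
Proof.
elim=> {S}.
- move=> g [_ [r hr]]; exists r => x y lt; rewrite /vmat.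
  case: eqP => // /hr; rewrite d_sym => le; move: lt; rewrite ltNge le //.
- move=> a S T _ [r1 h1] _ [r2 h2]; exists (Order.max r1 r2) => x y.
  rewrite gt_max => /andP [l1 l2]; by rewrite h1 // h2 // mulr0 addr0.
- move=> S T _ [r1 h1] _ [r2 h2]; exists (r1 + r2) => x z lt.
  apply: mprod_eq.
  have := @sum_conv_fin _ _ (fun y => S x y * T y z) [::] isT.
  rewrite big_nil; apply => y _.
  case: (lerP (d x y) r1) => hy; last by rewrite h1 // mul0r.
  rewrite h2 ?mulr0 //.
  have := d_tri x y z; lra.
- move=> S _ [r h]; exists r => x y lt; rewrite /adj h ?conjc0 //.
  by rewrite d_sym.
Qed.

Lemma sum_supp (h : X -> R) (s : seq X) (F : {fset X}) :
  (forall x, 0 <= h x) -> (forall z, z \notin s -> h z = 0) ->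
  \sum_(z <- F) h z <= \sum_(z <- undup s) h z.
Proof.
move=> h0 hs.
rewrite (bigID (mem s)) /=.
have -> : \sum_(i <- F | i \notin s) h i = 0 by apply: big1 => i; apply: hs.
rewrite addr0 -big_filter; apply: sum_le_sub => //.
- exact: filter_uniq (fset_uniq _).
- exact: undup_uniq.
- by move=> z; rewrite mem_filter mem_undup => /andP [].
Qed.

Lemma Cu_col_bounded {T} : Cu d T -> forall y, sbounded (fun z => nrm2 (T z y)).
Proof.
move=> /(_ 1 ltr01) [S [sgS bS]] y.
have [r hr] := star_gen_fprop sgS.
have [N hN] := ulf r; have [s [_ hs]] := hN y.
exists (2 * 1 ^+ 2 + 2 * \sum_(z <- undup s) nrm2 (S z y)) => F.
apply: le_trans (_ : \sum_(z <- F) (2 * nrm2 (T z y - S z y) + 2 * nrm2 (S z y)) <= _).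
  apply: ler_sum => z _.
  by have := nrm2D (T z y - S z y) (S z y); rewrite subrK.
rewrite big_split /= -!mulr_sumr.
apply: lerD; rewrite ler_pM2l //.
  exact: (bounded_col y F bS).
apply: sum_supp => [z|z zs]; first exact: nrm2_ge0.
rewrite hr; first by rewrite /nrm2 /= expr0n /= addr0.
rewrite ltNge d_sym; apply/negP => /hs; by rewrite (negbTE zs).
Qed.

Lemma Cu_row_bounded {T} : Cu d T -> forall y, sbounded (fun z => nrm2 (T y z)).
Proof.
move=> /(_ 1 ltr01) [S [sgS bS]] y.
have [r hr] := star_gen_fprop sgS.
have [N hN] := ulf r; have [s [_ hs]] := hN y.
exists (2 * 1 ^+ 2 + 2 * \sum_(z <- undup s) nrm2 (S y z)) => F.
apply: le_trans (_ : \sum_(z <- F) (2 * nrm2 (T y z - S y z) + 2 * nrm2 (S y z)) <= _).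
  apply: ler_sum => z _.
  by have := nrm2D (T y z - S y z) (S y z); rewrite subrK.
rewrite big_split /= -!mulr_sumr.
apply: lerD; rewrite ler_pM2l //.
  exact: (bounded_row y F bS).
apply: sum_supp => [z|z zs]; first exact: nrm2_ge0.
rewrite hr; first by rewrite /nrm2 /= expr0n /= addr0.
rewrite ltNge; apply/negP => /hs; by rewrite (negbTE zs).
Qed.

Definition colsq (T : mat R X) y := ssum (fun z => nrm2 (T z y)).

Lemma mprod_adj_diag T y : Cu d T ->
  mprod (adj T) T y y = ((colsq T y)%:C)%C.
Proof.
move=> cT; apply: mprod_eq.
have := sum_conv_ssum (fun z => nrm2 (T z y)) (fun z => nrm2_ge0 (T z y)) (Cu_col_bounded cT y).
by congr sum_conv; apply: funext => z; rewrite /adj mulJc.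
Qed.

End Ops.

Local Open Scope classical_set_scope.

Section Proj.
Variable R : realType.
Local Notation C := (R[i]).
Variable X : choiceType.
Local Notation nrm2 := (@nrm2 R).
Variable d : X -> X -> R.
Hypothesis dm : is_metric d.
Hypothesis ulf : unif_loc_finite d.

Lemma sg_Cu S : star_gen d S -> Cu d S.
Proof.
move=> sg e e0; exists S; split => // S0 F v.
under eq_bigr do under eq_bigr do rewrite subrr mul0r.
under eq_bigr do rewrite big1 // /nrm2 /= expr0n /= addr0.
rewrite big1 // mulr_ge0 ?sqr_ge0 //.
by apply: sumr_ge0 => *; exact: nrm2_ge0.
Qed.

Lemma proj_Cu (A : set X) : Cu d (@proj R X A).
Proof.
apply: sg_Cu.
have -> : proj A = @vmat R X (fun x => if `[< A x >] then Some x else None).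
  apply: funext => y; apply: funext => x; rewrite /proj /vmat.
  case: (eqVneq y x) => [->|ne]; first by case: `[< A x >]; rewrite ?eqxx.
  rewrite /=; case: `[< A x >] => //.
  by case: eqP => // -[] /esym/eqP; rewrite (negbTE ne).
apply: sg_pt; split.
  move=> x y z; case: (`[< A x >]) => //; case: (`[< A y >]) => //.
  by move=> [->] [->].
exists 0 => x y; case: `[< A x >] => // -[] <-; by rewrite d_xx.
Qed.

Lemma proj_adj (A : set X) : adj (@proj R X A) = proj A.
Proof.
apply: funext => x; apply: funext => y; rewrite /adj /proj.
have cj : forall b : bool, conjc (if b then 1 else 0 : C) = if b then 1 else 0.
  by case; [exact: conjc1|exact: conjc0].
rewrite cj; case: (eqVneq x y) => [->|ne] //.
Qed.

Lemma proj_mul (A : set X) : mprod (@proj R X A) (proj A) = proj A.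
Proof.
apply: funext => x; apply: funext => z; apply: mprod_eq.
have := @sum_conv_fin R X (fun y => proj A x y * proj A y z) [:: x] isT.
rewrite big_cons big_nil addr0 /=; have -> : (proj A x x * proj A x z : C) = proj A x z.
  rewrite /proj eqxx /=; case: (boolP `[< A x >]) => ax; rewrite ?mul1r //.
  by rewrite andbF mul0r.
apply => y; rewrite inE => ne; rewrite /proj eq_sym (negbTE ne) /= mul0r //.
Qed.

Variable s : mat R X -> mat R X.
Hypothesis hs : is_Cu_automorphism d s.

Lemma s_Cu T : Cu d T -> Cu d (s T).
Proof. by case: hs => h _; apply: h. Qed.

Lemma Q_idem (A : set X) : s (proj A) = mprod (adj (s (proj A))) (s (proj A)).
Proof.
case: hs => _ [_ [_ [_ [hm ha]]]].
rewrite -{1}proj_mul hm; try exact: proj_Cu.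
congr mprod; rewrite -{1}(proj_adj A) ha ?proj_adj //; exact: proj_Cu.
Qed.

Lemma Q_diag (A : set X) y : s (proj A) y y = ((colsq (s (proj A)) y)%:C)%C.
Proof.
rewrite {1}Q_idem (mprod_adj_diag dm ulf) //; exact: s_Cu (proj_Cu A).
Qed.

Lemma colsq_Q_ge0 (A : set X) y : 0 <= colsq (s (proj A)) y.
Proof.
apply: ssum_ge0 => [z|]; first exact: nrm2_ge0.
apply: (Cu_col_bounded dm ulf). apply: s_Cu; exact: proj_Cu.
Qed.

Lemma colsq_Q_le1 (A : set X) y : colsq (s (proj A)) y <= 1.
Proof.
have h0 := colsq_Q_ge0 A y.
have := ssum_ub (fun z => nrm2 (s (proj A) z y)) [fset y]%fset
   (Cu_col_bounded dm ulf (s_Cu (proj_Cu A)) y).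
rewrite big_seq_fset1 Q_diag nrm2_real -/(colsq _ _).
set t := colsq _ _ in h0 *; rewrite expr2 => h; nra.
Qed.

Lemma Q_split (A : set X) x y : A x ->
  colsq (s (proj [set x])) y + colsq (s (proj (A `\ x))) y = colsq (s (proj A)) y.
Proof.
move=> Ax.
have e : @proj R X A = (fun a b => 1 * proj [set x] a b + proj (A `\ x) a b).
  apply: funext => a; apply: funext => b; rewrite /proj mul1r.
  case: (a == b) => /=; last by rewrite addr0.
  case: (eqVneq a x) => [->|nx].
    rewrite (asboolT Ax) asboolT //= asboolF ?addr0 //.
    by case.
  rewrite (@asboolF ((set1 x) a)) ?add0r; last by move=> /= h; rewrite h eqxx in nx.
  case: (pselect (A a)) => aA.
    by rewrite (asboolT aA) asboolT //; split => // /= h; rewrite h eqxx in nx.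
  by rewrite (asboolF aA) asboolF //; case.
case: hs => _ [_ [_ [hl _]]].
have hQ : s (proj A) = fun a b => 1 * s (proj [set x]) a b + s (proj (A `\ x)) a b.
  by rewrite {1}e hl //; exact: proj_Cu.
have := Q_diag A y; rewrite {1}hQ /= mul1r !Q_diag -rmorphD.
by move=> /complexI ->.
Qed.

Lemma Q_seq (L : seq X) y : uniq L -> forall B : set X, (forall x, x \in L -> ~ B x) ->
  \sum_(x <- L) colsq (s (proj [set x])) y + colsq (s (proj B)) y =
  colsq (s (proj (B `|` [set z | z \in L]))) y.
Proof.
elim: L => [|a L IH] /= => [_ B _|/andP [aL uL] B hB].
  rewrite big_nil add0r; congr colsq; congr s; congr proj.
  by apply/seteqP; split => z /=; [left|case].
rewrite big_cons -addrA.
have hB' : forall x, x \in L -> ~ (B `|` [set a]) x.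
  move=> x xL [/(hB x)|/= xa]; first by rewrite inE xL orbT; apply.
  by move: aL; rewrite -xa xL.
have := IH uL _ hB'.
have -> : (B `|` [set a] `|` [set z | z \in L]) = B `|` [set z | z \in a :: L].
  apply/seteqP; split => z /=.
    by case=> [[h|->]|h]; [left|right; rewrite inE eqxx|right; rewrite inE h orbT].
  case=> [h|]; first by left; left.
  by rewrite inE => /orP [/eqP ->|h]; [left; right|right].
move=> <-.
rewrite -(Q_split (A := B `|` [set a]) (x := a)); last by right.
have -> : (B `|` [set a]) `\ a = B.
  apply/seteqP; split => z /=.
    by case=> [[h|->] ne] //.
  by move=> h; split; [left|move=> za; apply: (hB a); [rewrite inE eqxx|rewrite -za]].
by rewrite addrCA.
Qed.

Lemma sum_colsq_le1 (L : seq X) y : uniq L ->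
  \sum_(x <- L) colsq (s (proj [set x])) y <= 1.
Proof.
move=> uL; have := Q_seq y uL (B := set0) (fun _ _ h => h).
have := colsq_Q_ge0 set0 y.
have := colsq_Q_le1 (set0 `|` [set z | z \in L]) y.
lra.
Qed.

End Proj.

Section Main.
Variable R : realType.
Local Notation C := (R[i]).
Variable X : choiceType.
Local Notation nrm2 := (@nrm2 R).
Variable d : X -> X -> R.
Hypothesis dm : is_metric d.
Hypothesis ulf : unif_loc_finite d.

Lemma hyp_colsq (T : mat R X) y c : Cu d T ->
  ((c ^+ 2)%:E <= l2norm2 (fun z => T z y))%E -> c ^+ 2 <= colsq T y.
Proof.
move=> cT h; rewrite -lee_fin; apply: (le_trans h).
apply: ge_ereal_sup => _ [F [finF _] <-].
rewrite fsbig_finite // sumEFin lee_fin.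
exact: ssum_ub (Cu_col_bounded dm ulf cT y).
Qed.

Lemma Q_far (s : mat R X -> mat R X) (A : set X) (u : mat R X) (e : R) :
  is_Cu_automorphism d s ->
  s (proj A) = mprod (mprod u (proj A)) (adj u) ->
  unitary_Cu d u -> 0 < e ->
  exists r : R, forall y, (forall a, A a -> r < d y a) -> colsq (s (proj A)) y <= e ^+ 2.
Proof.
move=> hs hQ [cu _ _] e0.
have [S [sgS bS]] := cu e e0.
have [r hr] := star_gen_fprop dm sgS.
exists r => y far.
set h := fun a => if `[< A a >] then nrm2 (u y a) else 0.
have h0 : forall a, 0 <= h a.
  by move=> a; rewrite /h; case: ifP => _ //; exact: nrm2_ge0.
have hb : sbounded h.
  have [B hB] := Cu_row_bounded dm ulf cu y.
  exists B => F; apply: le_trans (hB F); apply: ler_sum => a _.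
  by rewrite /h; case: ifP => _ //; exact: nrm2_ge0.
have W : forall a, mprod u (proj A) y a = u y a * proj A a a.
  move=> a; apply: mprod_eq.
  have := @sum_conv_fin R X (fun z => u y z * proj A z a) [:: a] isT.
  rewrite big_cons big_nil addr0; apply => z; rewrite inE => ne.
  by rewrite /proj (negbTE ne) /= mulr0.
have E : mprod (mprod u (proj A)) (adj u) y y = ((ssum h)%:C)%C.
  apply: mprod_eq.
  have := sum_conv_ssum h h0 hb.
  congr sum_conv; apply: funext => a; rewrite W /adj /h /proj eqxx /=.
  case: ifP => _; last by rewrite mulr0 mul0r.
  by rewrite mulr1 mulcJ.
have D := Q_diag dm ulf hs A y.
rewrite {1}hQ E in D; move/complexI: D => <-.
apply: ssum_le => F; apply: le_trans (bounded_row y F bS).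
apply: ler_sum => a _; rewrite /h; case: ifP => [/asboolP Aa|_].
  by rewrite (hr y a (far a Aa)) subr0.
exact: nrm2_ge0.
Qed.

End Main.

Lemma exists_nat_gt (R : realType) (x : R) : exists n : nat, x < n%:R.
Proof.
case: (lerP 0 x) => h; first by exists (Num.bound x); exact: archi_boundP.
by exists 0%N.
Qed.

Lemma sum_const_seq (R : realType) (X : Type) (L : seq X) (a : R) :
  \sum_(x <- L) a = (size L)%:R * a.
Proof.
elim: L => [|y L IH]; first by rewrite big_nil mul0r.
by rewrite big_cons IH /= mulrS; ring.
Qed.

Theorem proposition6p1p9 (R : realType) (X : choiceType) (d : X -> X -> R)
  (s : mat R X -> mat R X) (f : X -> X) :
  is_metric d -> unif_loc_finite d -> is_Cu_automorphism d s ->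
  (exists c : R, 0 < c /\
     forall x : X, ((c ^+ 2)%:E <= l2norm2 (fun z => s (eproj x) z (f x)))%E) ->
  (forall A : set X, exists u : mat R X,
     unitary_Cu d u /\ s (proj A) = mprod (mprod u (proj A)) (adj u)) ->
  exists r : R, forall x : X, d x (f x) <= r.
Proof.
move=> dm ulf hs [c [c0 hc]] hA.
have K1 : forall x, c ^+ 2 <= colsq (s (proj [set x])) (f x).
  move=> x; apply: (hyp_colsq dm ulf); last exact: hc x.
  apply: (s_Cu hs); exact: (proj_Cu dm).
have K2 : forall A : set X, exists r : R, forall x, A x -> exists a, A a /\ d (f x) a <= r.
  move=> A; have [u [uu hQ]] := hA A.
  have c20 : 0 < c / 2 by rewrite divr_gt0.
  have [r hr] := Q_far dm ulf hs hQ uu c20.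
  exists r => x Ax.
  case: (pselect (exists a, A a /\ d (f x) a <= r)) => // H; exfalso.
  have far : forall a, A a -> r < d (f x) a.
    move=> a Aa; rewrite ltNge; apply/negP => le; apply: H; by exists a.
  have h1 := hr (f x) far.
  have h2 := K1 x.
  have h3 := Q_split dm ulf hs (f x) Ax.
  have h4 := colsq_Q_ge0 dm ulf hs (A `\ x) (f x).
  have h5 : (c / 2) ^+ 2 = c ^+ 2 / 4 by field.
  have h6 : 0 < c ^+ 2 by rewrite exprn_gt0.
  lra.
have K3 : forall L U : seq X, uniq L -> (forall x, x \in L -> f x \in U) ->
    (size L)%:R * c ^+ 2 <= (size U)%:R.
  move=> L U uL LU.
  rewrite -sum_const_seq.
  apply: (@le_trans _ _ (\sum_(x <- L) \sum_(y <- undup U) colsq (s (proj [set x])) y)).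
    rewrite big_seq [Y in _ <= Y]big_seq; apply: ler_sum => x xL.
    apply: le_trans (K1 x) _.
    apply: (le_sum_mem (undup U) (fun y => colsq (s (proj [set x])) y) (f x) (undup_uniq U)).
      by rewrite mem_undup LU.
    by move=> y; apply: (colsq_Q_ge0 dm ulf hs).
  rewrite exchange_big /=.
  apply: (@le_trans _ _ (\sum_(y <- undup U) (1 : R))).
    apply: ler_sum => y _; apply: (sum_colsq_le1 dm ulf hs) => //.
  rewrite sum_const_seq mulr1 ler_nat; exact: size_undup.
case: (pselect (exists r : R, forall x, d x (f x) <= r)) => // NB; exfalso.
have unb : forall B : R, exists x, B < d x (f x).
  move=> B; case: (pselect (exists x, B < d x (f x))) => // H; exfalso; apply: NB.
  exists B => x; rewrite leNgt; apply/negP => lt; apply: H; by exists x.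
have dpos : forall x y, 0 <= d x y by case: dm.
have Ex : forall (n : R) (E U : seq X), exists x, n < d x (f x) /\ x \notin E /\ f x \notin U.
  move=> n E U.
  case: (pselect (exists x, n < d x (f x) /\ x \notin E /\ f x \notin U)) => // H; exfalso.
  have H' : forall x, n < d x (f x) -> x \notin E -> f x \in U.
    move=> x h1 h2; case: (boolP (f x \in U)) => // h3; exfalso; apply: H; by exists x.
  have build : forall k : nat, exists L : seq X,
      [/\ uniq L, size L = k & forall x, x \in L -> n < d x (f x) /\ x \notin E].
    elim=> [|k [L [uL sL hL]]]; first by exists [::].
    have [x hx] := unb (`|n| + \sum_(e <- undup (E ++ L)) d e (f e)).
    have sg0 : 0 <= \sum_(e <- undup (E ++ L)) d e (f e) by apply: sumr_ge0 => *.
    have nn : n <= `|n| by exact: ler_norm.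
    have nx : x \notin E ++ L.
      apply/negP => xin.
      have := le_sum_mem (undup (E ++ L)) (fun e => d e (f e)) x (undup_uniq _).
      rewrite mem_undup => /(_ xin (fun e => dpos e (f e))).
      have := normr_ge0 n; lra.
    exists (x :: L); split => /=.
    - by rewrite uL andbT; move: nx; rewrite mem_cat negb_or => /andP [].
    - by rewrite sL.
    - move=> y; rewrite inE => /orP [/eqP ->|/hL //].
      split; first by lra.
      by move: nx; rewrite mem_cat negb_or => /andP [].
  have [K hK] := exists_nat_gt ((size U)%:R / c ^+ 2).
  have [L [uL sL hL]] := build K.
  have := K3 L U uL (fun x xL => H' x (hL x xL).1 (hL x xL).2).
  rewrite sL.
  have : (size U)%:R < K%:R * c ^+ 2 by rewrite -ltr_pdivrMr // exprn_gt0.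
  lra.
have ballE : forall (r : R) (l : seq X) (g : X -> X), exists E : seq X,
    forall y, y \in l -> forall z, d (g y) z <= r -> z \in E.
  move=> r l g; have [N hN] := ulf r.
  elim: l => [|a l [E hE]]; first by exists [::].
  have [sa [_ hsa]] := hN (g a).
  exists (sa ++ E) => y; rewrite inE => /orP [/eqP -> | yl] z hz; rewrite mem_cat.
    by rewrite hsa.
  by rewrite (hE y yl z hz) orbT.
have next : forall (n : nat) (l : seq X), exists x, [/\ n%:R < d x (f x),
    (forall y, y \in l -> n%:R < d (f y) x) & (forall y, y \in l -> n%:R < d (f x) y)].
  move=> n l.
  have [E hE] := ballE n%:R l f.
  have [U hU] := ballE n%:R l id.
  have [x [h1 [h2 h3]]] := Ex n%:R E U.
  exists x; split => // y yl; rewrite ltNge; apply/negP => le.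
    by rewrite (hE y yl x le) in h2.
  rewrite (d_sym dm) in le.
  by rewrite (hU y yl (f x) le) in h3.
pose nx := fun n l => proj1_sig (cid (next n l)).
have nxP : forall n l, [/\ n%:R < d (nx n l) (f (nx n l)),
    (forall y, y \in l -> n%:R < d (f y) (nx n l)) &
    (forall y, y \in l -> n%:R < d (f (nx n l)) y)].
  by move=> n l; exact: (proj2_sig (cid (next n l))).
pose g := fix g (n : nat) : seq X := if n is n'.+1 then rcons (g n') (nx n' (g n')) else [::].
pose pt := fun n => nx n (g n).
have gS : forall n, g n.+1 = rcons (g n) (pt n) by [].
have ing : forall k n, (k < n)%N -> pt k \in g n.
  move=> k; elim=> [//|n IH]; rewrite gS mem_rcons inE ltnS leq_eqVlt.
  by case/orP => [/eqP ->|/IH ->]; rewrite ?eqxx ?orbT.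
have sep : forall m k, m%:R < d (f (pt m)) (pt k).
  move=> m k; case: (ltngtP k m) => [km|mk|->].
  - by case: (nxP m (g m)) => _ _ /(_ _ (ing _ _ km)).
  - case: (nxP k (g k)) => _ /(_ _ (ing _ _ mk)) h _.
    have : (m%:R : R) < k%:R by rewrite ltr_nat.
    rewrite /pt in h *; lra.
  - by case: (nxP m (g m)) => h _ _; rewrite (d_sym dm).
have [r hr] := K2 [set x | exists k, x = pt k].
have [m hm] := exists_nat_gt r.
have [a [[k ->] le]] := hr (pt m) (ex_intro _ m erefl).
have := sep m k; lra.
Qed.
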